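(* Let $r\ge 3$ and $1\le s\le r-1$ be integers. Then the automorphism group of the split Praeger-Xu graph $\mathrm{sC}(r,s)$ is $\mathrm{Aut}(\mathrm{sC}(r,s))=H$ (acting on $\mathrm{sC}(r,s)$ as described below), and $H$ acts transitively on $V\mathrm{sC}(r,s)$.
   Context: Praeger-Xu graphs: for $r\ge3$, $s\ge1$, let $V_{r,s}$ be the set of pairs $(x;\varepsilon_0\varepsilon_1\cdots\varepsilon_{s-1})$ with $x\in\mathbb{Z}_r$ and $\varepsilon_i\in\mathbb{Z}_2$; such a pair is identified with the directed walk $(x,\varepsilon_0),(x+1,\varepsilon_1),\dots,(x+s-1,\varepsilon_{s-1})$ in $\mathbb{Z}_r\times\mathbb{Z}_2$. The digraph $\vec{\mathrm{C}}(r,s)$ has vertex set $V_{r,s}$ and arcs from $(x;\varepsilon h)$ to $(x+1;h0)$ and $(x+1;h1)$ for every $\varepsilon\in\mathbb{Z}_2$ and every string $h$ of length $s-1$. $\mathrm{C}(r,s)$ is the underlying undirected ($4$-valent) graph. The partition $\mathcal{S}$ of $E\mathrm{C}(r,s)$ consists of the $4$-cycles $(x;0h)\sim(x+1;h0)\sim(x;1h)\sim(x+1;h1)\sim(x;0h)$, for $x\in\mathbb{Z}_r$ and $h$ a string in $\mathbb{Z}_2$ of length $s-1$. Splitting: for a $4$-valent graph $\Delta$ and a partition $\mathcal{C}$ of $E\Delta$ into cycles, $\mathrm{s}(\Delta,\mathcal{C})$ is the cubic graph with vertex set $\{(\alpha,C)\in V\Delta\times\mathcal{C}:\alpha\in VC\}$,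 $(\alpha,C)\sim(\beta,D)$ iff either $C\ne D$ and $\alpha=\beta$, or $C=D$ and $\alpha\sim\beta$ in $\Delta$. The split Praeger-Xu graph is $\mathrm{sC}(r,s)=\mathrm{s}(\mathrm{C}(r,s),\mathcal{S})$. The group $H$: let $H\cong C_2\wr D_r$ be the group of permutations of $\mathbb{Z}_r\times\mathbb{Z}_2$ of the form $(x,i)\mapsto(\varphi(x),i+c_x)$ with $\varphi(x)=\pm x+b$ ($b\in\mathbb{Z}_r$) and $(c_x)_{x\in\mathbb{Z}_r}\in\mathbb{Z}_2^{r}$ (generated by the transpositions $\tau_i$ swapping $(i,0),(i,1)$, the rotation $(x,i)\mapsto(x+1,i)$ and the reflection $(x,i)\mapsto(-x,i)$). An element $g\in H$ maps the walk $(x+j,\varepsilon_j)_{0\le j\le s-1}$ to the walk $((x+j,\varepsilon_j)^g)_j$, which is a forward or backward directed walk; reading it in the forward direction gives an element of $V_{r,s}$. This defines a faithful action of $H$ by automorphisms of $\mathrm{C}(r,s)$ that preserves $\mathcal{S}$, hence an action on $\mathrm{sC}(r,s)$ by $(v,C)^g=(v^g,C^g)$. *)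

(* Defs.v *)
From HB Require Import structures.
From mathcomp Require Import all_boot all_order all_fingroup all_algebra.
Set Implicit Arguments. Unset Strict Implicit. Unset Printing Implicit Defensive.
Import GRing.Theory.
Local Open Scope ring_scope.

(* Z_r is modelled by 'Z_r (the statement assumes 2 < r, so 'Z_r has r elements). *)

Definition PXvert (r s : nat) : finType := ('Z_r * (s.-tuple bool))%type.

(* Arc of the digraph C->(r,s): (x; eps h) -> (x+1; h delta). *)
Definition PXarc (r s : nat) (u v : PXvert r s) : bool :=
  (v.1 == u.1 + 1) && (behead (val u.2) == take s.-1 (val v.2)).

Definition PXadj (r s : nat) (u v : PXvert r s) : bool :=
  PXarc u v || PXarc v u.

(* Vertex set of the 4-cycle (x;0h) ~ (x+1;h0) ~ (x;1h) ~ (x+1;h1) of S,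
   indexed by x and the string h of length s-1. *)
Definition PXcycle (r s : nat) (x : 'Z_r) (h : seq bool) : {set PXvert r s} :=
  [set v : PXvert r s | ((v.1 == x) && (behead (val v.2) == h))
                      || ((v.1 == x + 1) && (take s.-1 (val v.2) == h))].

(* The partition S, each 4-cycle being represented by its vertex set. *)
Definition PXcycles (r s : nat) : {set {set PXvert r s}} :=
  [set @PXcycle r s x (val h) | x : 'Z_r, h : (s.-1).-tuple bool].

Definition sPXpred (r s : nat) (p : (PXvert r s * {set PXvert r s})%type) : bool :=
  (p.2 \in PXcycles r s) && (p.1 \in p.2).

Definition sPXvert (r s : nat) : finType :=
  {p : (PXvert r s * {set PXvert r s})%type | sPXpred p}.

Definition sPXadj (r s : nat) (a b : sPXvert r s) : bool :=
  let: (al, C) := val a in let: (be, D) := val b in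
  ((C != D) && (al == be)) || ((C == D) && PXadj al be).

(* The group H = C_2 wr D_r as a set of permutations of Z_r x Z_2:
   (x,i) |-> (+-x + b, i + c_x). *)
Definition Hgroup (r : nat) : {set {perm ('Z_r * bool)}} :=
  [set g : {perm ('Z_r * bool)} |
     [exists sg : bool, exists b : 'Z_r, exists c : {ffun 'Z_r -> bool},
        [forall p : ('Z_r * bool)%type,
           g p == ((if sg then - p.1 else p.1) + b, addb p.2 (c p.1))]]].

(* Action on V_{r,s}: map the walk (x+j, eps_j)_j pointwise and read the
   image walk in the forward direction. *)
Definition actV (r s : nat) (g : {perm ('Z_r * bool)}) (v : PXvert r s)
    : PXvert r s :=
  let pts := fun j : nat => g (v.1 + j%:R, nth false (val v.2) j) in
  let forward := (g (1, false)).1 == (g (0, false)).1 + 1 in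
  if forward then ((pts 0%N).1, [tuple (pts j).2 | j < s])
  else ((pts s.-1).1, [tuple (pts (s.-1 - j)%N).2 | j < s]).

Definition actP (r s : nat) (g : {perm ('Z_r * bool)})
    (p : (PXvert r s * {set PXvert r s})%type) :=
  (@actV r s g p.1, [set @actV r s g v | v in p.2]).

Definition is_sPXaut (r s : nat) (f : sPXvert r s -> sPXvert r s) : Prop :=
  bijective f /\ forall a b, sPXadj (f a) (f b) = sPXadj a b.

(* Main.v *)
Require Import Defs.
From mathcomp Require Import all_boot all_order all_fingroup all_algebra.
From mathcomp Require Import zify.
From mathcomp.algebra_tactics Require Import ring.
Set Implicit Arguments. Unset Strict Implicit. Unset Printing Implicit Defensive.
Import GRing.Theory.

Section PX.
Local Open Scope ring_scope.
Variables r s : nat.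
Hypothesis Hr : (2 < r)%N.
Hypothesis Hs : (0 < s)%N.
Hypothesis Hsr : (s <= r - 1)%N.

Local Notation Z := 'Z_r.
Local Notation V := (PXvert r s).

Lemma r_gt1 : (1 < r)%N. Proof. lia. Qed.

Lemma valZn k : (k < r)%N -> val (k%:R : Z) = k.
Proof. move=> kr; have := val_Zp_nat r_gt1 k; rewrite modn_small //. Qed.

Lemma Z2_neq0 : (1 + 1 : Z) != 0.
Proof.
have -> : (1 + 1 : Z) = 2%:R by [].
apply/eqP => /(congr1 val); rewrite valZn //.
Qed.

Lemma Z1_neq0 : (1 : Z) != 0.
Proof. rewrite -[1 : Z]/(1%:R); apply/eqP => /(congr1 val); rewrite valZn //; lia. Qed.


Definition bit (v : V) (j : nat) : bool := nth false (val v.2) j.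

Lemma vext (v w : V) : v.1 = w.1 -> (forall j, (j < s)%N -> bit v j = bit w j) -> v = w.
Proof.
case: v => x e; case: w => y f /= -> H; congr (_, _).
apply: val_inj; apply: (@eq_from_nth _ false); first by rewrite !size_tuple.
by move=> j; rewrite size_tuple; apply: H.
Qed.

Definition mkV (x : Z) (d : nat -> bool) : V := (x, [tuple d (val j) | j < s]).

Lemma bit_mkV x d j : (j < s)%N -> bit (mkV x d) j = d j.
Proof. by move=> js; rewrite /bit /= -[j]/(val (Ordinal js)) nth_mktuple. Qed.

Lemma size_tup (u : s.-tuple bool) : size (val u) = s.
Proof. exact: size_tuple. Qed.

Lemma behead_eqP (u v : s.-tuple bool) :
  reflect (forall j, (j < s.-1)%N -> nth false u j.+1 = nth false v j.+1) (behead u == behead v).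
Proof.
apply: (iffP eqP) => [E j js | H].
  by have := congr1 (nth false ^~ j) E; rewrite !nth_behead.
apply: (@eq_from_nth _ false); first by rewrite !size_behead !size_tup.
by move=> j; rewrite size_behead size_tup => js; rewrite !nth_behead H.
Qed.

Lemma take_eqP (u v : s.-tuple bool) :
  reflect (forall j, (j < s.-1)%N -> nth false u j = nth false v j) (take s.-1 u == take s.-1 v).
Proof.
have sz : forall w : s.-tuple bool, size (take s.-1 w) = s.-1.
  by move=> w; rewrite size_takel // size_tup; lia.
apply: (iffP eqP) => [E j js | H].
  by have := congr1 (nth false ^~ j) E; rewrite !nth_take.
apply: (@eq_from_nth _ false); first by rewrite !sz.
by move=> j; rewrite sz => js; rewrite !nth_take // H.
Qed.

Lemma bt_eqP (u v : s.-tuple bool) :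
  reflect (forall j, (j < s.-1)%N -> nth false u j.+1 = nth false v j) (behead u == take s.-1 v).
Proof.
have sz : size (take s.-1 v) = s.-1 by rewrite size_takel // size_tup; lia.
apply: (iffP eqP) => [E j js | H].
  by have := congr1 (nth false ^~ j) E; rewrite nth_behead nth_take.
apply: (@eq_from_nth _ false); first by rewrite sz size_behead size_tup.
by move=> j; rewrite size_behead size_tup => js; rewrite nth_behead nth_take // H.
Qed.

Lemma arcP (u v : V) :
  reflect (v.1 = u.1 + 1 /\ forall j, (j < s.-1)%N -> bit u j.+1 = bit v j) (PXarc u v).
Proof.
rewrite /PXarc; apply: (iffP andP) => [[/eqP -> /bt_eqP H] | [-> H]]; split => //.
by apply/bt_eqP.
Qed.


Lemma addr_eq_self (x k : Z) : (x + k == x) = (k == 0).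
Proof. by rewrite -{2}[x]addr0 (inj_eq (addrI x)). Qed.

Lemma lvl1 (x : Z) : (x + 1 == x) = false.
Proof. by rewrite addr_eq_self (negbTE Z1_neq0). Qed.

Lemma lvl2 (x : Z) : (x + 1 + 1 == x) = false.
Proof. by rewrite -addrA addr_eq_self (negbTE Z2_neq0). Qed.

Definition CL (a : V) : {set V} := @PXcycle r s a.1 (behead (val a.2)).
Definition CR (a : V) : {set V} := @PXcycle r s (a.1 - 1) (take s.-1 (val a.2)).

Lemma inCL (v a : V) : (v \in CL a) = ((v.1 == a.1) && (behead (val v.2) == behead (val a.2))) || PXarc a v.
Proof. by rewrite /CL /PXcycle inE /PXarc [behead _ == take _ _]eq_sym. Qed.

Lemma inCR (v a : V) : (v \in CR a) = PXarc v a || ((v.1 == a.1) && (take s.-1 (val v.2) == take s.-1 (val a.2))).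
Proof. by rewrite /CR /PXcycle inE /PXarc subrK eq_sym subr_eq. Qed.

Lemma behead_mkV x d : behead (val (mkV x d).2) = mkseq (fun j => d j.+1) s.-1.
Proof.
apply: (@eq_from_nth _ false); first by rewrite size_behead size_tup size_mkseq.
move=> j; rewrite size_behead size_tup => js.
by rewrite nth_behead nth_mkseq // -/(bit _ _) bit_mkV //; lia.
Qed.

Lemma take_mkV x d : take s.-1 (val (mkV x d).2) = mkseq d s.-1.
Proof.
have sz : size (take s.-1 (val (mkV x d).2)) = s.-1 by rewrite size_takel // size_tup; lia.
apply: (@eq_from_nth _ false); first by rewrite sz size_mkseq.
move=> j; rewrite sz => js.
by rewrite nth_take // nth_mkseq // -/(bit _ _) bit_mkV //; lia.
Qed.

Lemma PXcycle_inj x x' (h h' : seq bool) : size h = s.-1 -> size h' = s.-1 ->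
  @PXcycle r s x h = @PXcycle r s x' h' -> x = x' /\ h = h'.
Proof.
move=> sh sh' E.
pose wL := mkV x (nth false (false :: h)).
pose wR := mkV (x + 1) (nth false h).
have bL : behead (val wL.2) = h.
  by rewrite behead_mkV -sh; apply: mkseq_nth.
have tR : take s.-1 (val wR.2) = h.
  by rewrite take_mkV -sh; apply: mkseq_nth.
have : wL \in @PXcycle r s x h by rewrite inE /= bL !eqxx.
have : wR \in @PXcycle r s x h by rewrite inE /= tR !eqxx orbT.
rewrite E !inE /= bL tR => /orP [/andP [/eqP e1 _] | /andP [/eqP e1 _]]
  /orP [/andP [/eqP e2 /eqP e3] | /andP [/eqP e2 _]] //.
- by move: (lvl2 x); rewrite e1 -e2 eqxx.
- have e4 : x = x' by apply: (addIr 1).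
  by move: (lvl1 x'); rewrite -e2 -e4 eqxx.
Qed.

Lemma size_behead_t (u : s.-tuple bool) : size (behead (val u)) = s.-1.
Proof. by rewrite size_behead size_tup. Qed.
Lemma size_take_t (u : s.-tuple bool) : size (take s.-1 (val u)) = s.-1.
Proof. by rewrite size_takel // size_tup; lia. Qed.

Lemma CL_CR (a b : V) : (CL a == CR b) = PXarc a b.
Proof.
apply/eqP/idP => [/PXcycle_inj [] //| ].
- by rewrite size_behead_t.
- by rewrite size_take_t.
- by move=> e1 e2; rewrite /PXarc e2 e1 subrK !eqxx.
- by case/andP => /eqP e1 /eqP e2; rewrite /CL /CR e1 e2 addrK.
Qed.

Lemma CL_CL (a b : V) : (CL a == CL b) = (a.1 == b.1) && (behead (val a.2) == behead (val b.2)).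
Proof.
apply/eqP/andP => [/PXcycle_inj [] | [/eqP e1 /eqP e2]]; rewrite ?size_behead_t //.
- by move=> -> ->.
- by rewrite /CL e1 e2.
Qed.

Lemma CR_CR (a b : V) : (CR a == CR b) = (a.1 == b.1) && (take s.-1 (val a.2) == take s.-1 (val b.2)).
Proof.
apply/eqP/andP => [/PXcycle_inj [] | [/eqP e1 /eqP e2]]; rewrite ?size_take_t //.
- by move=> /(congr1 (fun y => y + 1)); rewrite !subrK => -> ->.
- by rewrite /CR e1 e2.
Qed.

Lemma arc_irr (a : V) : PXarc a a = false.
Proof. by apply/negbTE/negP => /arcP [/eqP]; rewrite eq_sym lvl1. Qed.

Lemma arc_asym (a b : V) : PXarc a b -> PXarc b a = false.
Proof.
move=> /arcP [e _]; apply/negbTE/negP => /arcP [e' _].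
by move: (lvl2 a.1); rewrite -e -e' eqxx.
Qed.

Lemma CL_neq_CR (a : V) : (CL a == CR a) = false.
Proof. by rewrite CL_CR arc_irr. Qed.


Lemma arc_lvl (a b : V) : PXarc a b -> b.1 = a.1 + 1.
Proof. by case/arcP. Qed.

Lemma adj_same_lvl (a b : V) : a.1 = b.1 -> PXadj a b = false.
Proof.
move=> e; rewrite /PXadj; apply/negbTE/negP => /orP [] /arc_lvl e'.
- by move: (lvl1 a.1); rewrite -e' e eqxx.
- by move: (lvl1 b.1); rewrite -e' e eqxx.
Qed.

Definition W := (V * bool)%type.
Definition cyc (w : W) : {set V} := if w.2 then CL w.1 else CR w.1.

Lemma CL_mem (a : V) : CL a \in PXcycles r s.
Proof. by apply/imset2P; exists a.1 [tuple of behead (val a.2)]. Qed.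

Lemma CR_mem (a : V) : CR a \in PXcycles r s.
Proof.
by apply/imset2P; exists (a.1 - 1) (@Tuple s.-1 bool (take s.-1 (val a.2)) (introT eqP (size_take_t a.2))).
Qed.

Lemma cyc_pred (w : W) : sPXpred (w.1, cyc w).
Proof.
rewrite /sPXpred /cyc /=; case: w.2.
- by rewrite CL_mem inCL !eqxx.
- by rewrite CR_mem inCR !eqxx orbT.
Qed.

Definition E (w : W) : sPXvert r s := exist _ (w.1, cyc w) (cyc_pred w).
Definition Einv (p : sPXvert r s) : W := ((val p).1, (val p).2 == CL (val p).1).

Lemma cyc_cases (a : V) C : C \in PXcycles r s -> a \in C -> C = CL a \/ C = CR a.
Proof.
case/imset2P => x h _ _ ->; rewrite inE => /orP [/andP [/eqP e1 /eqP e2] | /andP [/eqP e1 /eqP e2]].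
- by left; rewrite /CL e1 e2.
- by right; rewrite /CR e1 e2 addrK.
Qed.

Lemma EK : cancel Einv E.
Proof.
case=> [[a C] pf]; have /andP [C1 C2] := pf; apply: val_inj => /=; congr (_, _).
rewrite /cyc /=; case: eqP => [-> //|ne].
by case: (cyc_cases C1 C2) => // e; rewrite e in ne.
Qed.

Lemma EinvK : cancel E Einv.
Proof.
case=> a [] /=; rewrite /Einv /cyc /= ?eqxx //.
by rewrite eq_sym CL_neq_CR.
Qed.

Definition A (w1 w2 : W) : bool :=
  (w1.2 != w2.2) && ((w1.1 == w2.1) || (if w1.2 then PXarc w1.1 w2.1 else PXarc w2.1 w1.1)).

Lemma adjE w1 w2 : sPXadj (E w1) (E w2) = A w1 w2.
Proof.
case: w1 w2 => a [] [b []]; rewrite /sPXadj /A /cyc /=; rewrite /cyc /=.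
- case: (eqVneq a b) => [->|nab]; first by rewrite !eqxx /= adj_same_lvl.
  rewrite andbF /=; case e: (CL a == CL b) => //=.
  by move: e; rewrite CL_CL => /andP [/eqP e _]; apply: adj_same_lvl.
- rewrite CL_CR /PXadj; case: (PXarc a b) => /=; by rewrite ?orbT ?andbT.
- rewrite eq_sym CL_CR /PXadj; case: (PXarc b a) => /=; by rewrite ?orbT ?andbT ?orbF.
- case: (eqVneq a b) => [->|nab]; first by rewrite !eqxx /= adj_same_lvl.
  rewrite andbF /=; case e: (CR a == CR b) => //=.
  by move: e; rewrite CR_CR => /andP [/eqP e _]; apply: adj_same_lvl.
Qed.


Lemma A_sym a b : A a b = A b a.
Proof. by case: a b => x [] [y []]; rewrite /A /= //; rewrite eq_sym. Qed.

Definition Q4 (a b : W) : bool :=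
  [exists c : W, exists d : W, [&& A b c, A c d, A d a, c != a & d != b]].

Lemma Q4_sym a b : Q4 a b -> Q4 b a.
Proof.
case/existsP => c /existsP [d /and5P [h1 h2 h3 h4 h5]].
by apply/existsP; exists d; apply/existsP; exists c; rewrite A_sym h3 A_sym h2 A_sym h1 h5 h4.
Qed.

Definition flip0 (a : V) : V := mkV a.1 (fun j => if j == 0%N then ~~ bit a 0 else bit a j).
Definition flipL (a : V) : V := mkV a.1 (fun j => if j == s.-1 then ~~ bit a j else bit a j).

Lemma flip0_neq a : (flip0 a == a) = false.
Proof.
apply/negbTE/eqP => /(congr1 (bit^~ 0%N)); rewrite bit_mkV //=.
by case: (bit a 0).
Qed.

Lemma flipL_neq a : (flipL a == a) = false.
Proof.
apply/negbTE/eqP => /(congr1 (bit^~ s.-1)); rewrite bit_mkV ?eqxx; last by lia.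
by case: (bit a s.-1).
Qed.

Lemma Q4_arc x y : PXarc x y -> Q4 (x, true) (y, false).
Proof.
move=> /arcP [e H].
have a1 : PXarc (flip0 x) y.
  apply/arcP; split=> // j js; rewrite bit_mkV /=; last by lia.
  exact: H.
have a2 : PXarc (flip0 x) (flipL y).
  apply/arcP; split=> // j js; rewrite !bit_mkV /=; try lia.
  have -> : (j == s.-1) = false by apply/negbTE; rewrite neq_ltn js.
  exact: H.
have a3 : PXarc x (flipL y).
  apply/arcP; split=> // j js; rewrite bit_mkV /=; last by lia.
  have -> : (j == s.-1) = false by apply/negbTE; rewrite neq_ltn js.
  exact: H.
apply/existsP; exists (flip0 x, true); apply/existsP; exists (flipL y, false).
by rewrite /A /= a1 a2 a3 !orbT !xpair_eqE flip0_neq flipL_neq.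
Qed.

Lemma noQ4_spoke x sa sb : sa != sb -> ~~ Q4 (x, sa) (x, sb).
Proof.
wlog -> : sa sb / sa = true.
  move=> hw ne; case: sa ne => [|/= ne]; first exact: hw.
  have -> : sb = true by case: sb ne.
  by apply/negP => /Q4_sym; apply/negP; apply: hw.
move=> ne; have -> : sb = false by case: sb ne.
apply/negP => /existsP [[g sc] /existsP [[d sd] /and5P [h1 h2 h3 h4 h5]]].
move: h1 h2 h3 h4 h5; rewrite /A /=.
case: sc => //=; case: sd => //=.
move=> /orP [/eqP e1 | a1]; first by rewrite e1 eqxx.
move=> h2 /orP [/eqP e3 | a3]; first by rewrite e3 => _; rewrite eqxx.
move: h2 => /orP [/eqP e2 | a2] _ _.
  by move: (lvl2 g.1); rewrite -(arc_lvl a1) -(arc_lvl a3) e2 eqxx.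
by move: (lvl1 x.1); rewrite -(arc_lvl a3) (arc_lvl a2) -(arc_lvl a1) eqxx.
Qed.

Lemma spokeQ4 a b : A a b -> (a.1 == b.1) = ~~ Q4 a b.
Proof.
case: a b => x sa [y sb]; rewrite /A /= => /andP [ne].
case: eqP => [<- _ | nxy]; first by rewrite noQ4_spoke.
case: sa ne => /=; case: sb => //= _ ar; apply/esym/negbF.
- exact: Q4_arc.
- exact/Q4_sym/Q4_arc.
Qed.


Definition push (a : V) (b : bool) : V :=
  mkV (a.1 + 1) (fun j => if (j < s.-1)%N then bit a j.+1 else b).

Lemma arc_push a b : PXarc a (push a b).
Proof.
apply/arcP; split=> // j js; rewrite bit_mkV ?js //; lia.
Qed.

Definition pull (a : V) : V := mkV (a.1 - 1) (fun j => if j is i.+1 then bit a i else false).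

Lemma arc_pull a : PXarc (pull a) a.
Proof.
apply/arcP; split; first by rewrite subrK.
by move=> j js; rewrite bit_mkV //; lia.
Qed.

Lemma iter_push_lvl j a : (iter j (push^~ false) a).1 = a.1 + j%:R.
Proof.
elim: j => [|j IH]; first by rewrite addr0.
by rewrite iterS /= IH -addrA -mulrSr.
Qed.

Lemma iter_push_bit j a i : (i + j < s)%N -> bit (iter j (push^~ false) a) i = bit a (i + j).
Proof.
elim: j i => [|j IH] i ij; first by rewrite addn0.
rewrite iterS /push bit_mkV; last by lia.
have -> : (i < s.-1)%N by lia.
by rewrite IH; [congr bit; lia | lia].
Qed.

Lemma bitlemma (G : V -> V) :
  (forall a b, PXarc a b -> forall j, (j.+1 < s)%N -> bit (G a) j.+1 = bit (G b) j) ->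
  (forall a b, a.1 = b.1 -> (forall j, (j < s)%N -> bit (G a) j = bit (G b) j) -> a = b) ->
  exists c : Z -> bool, forall a j, (j < s)%N -> bit (G a) j = bit a j (+) c (a.1 + j%:R).
Proof.
move=> P I.
have C1 : forall k, (k <= s.-1)%N -> forall a a', a.1 = a'.1 ->
    (forall i, (i <= s.-1 - k)%N -> bit a i = bit a' i) ->
    bit (G a) (s.-1 - k) = bit (G a') (s.-1 - k).
  elim=> [|k IH] ks a a' e H.
    have -> // : a = a'.
    by apply: vext => // j js; apply: H; lia.
  have j1 : (s.-1 - k.+1).+1 = (s.-1 - k)%N by lia.
  rewrite -(P _ _ (arc_pull a)); last by lia.
  rewrite -(P _ _ (arc_pull a')); last by lia.
  rewrite j1; apply: IH; first by lia.
    by rewrite /pull /= e.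
  move=> [|i] ik; rewrite !bit_mkV //; try lia.
  by apply: H; lia.
pose th y b := bit (G (mkV y (fun i => if i is 0 then b else false))) 0.
have C1' : forall a, bit (G a) 0 = th a.1 (bit a 0).
  move=> a; have := C1 s.-1 (leqnn _) a (mkV a.1 (fun i => if i is 0 then bit a 0 else false)) erefl.
  rewrite subnn; apply=> i; rewrite leqn0 => /eqP ->.
  by rewrite bit_mkV.
have C2 : forall j a, (j < s)%N -> bit (G a) j = bit (G (iter j (push^~ false) a)) 0.
  elim=> [|j IH] a js //.
  by rewrite (P _ _ (arc_push a false)) // IH ?iterSr //; lia.
have C3 : forall a j, (j < s)%N -> bit (G a) j = th (a.1 + j%:R) (bit a j).
  by move=> a j js; rewrite C2 // C1' iter_push_lvl iter_push_bit.
have C4 : forall y, th y true = ~~ th y false.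
  move=> y.
  pose a0 := mkV y (fun i => if i is 0 then false else false).
  pose a1 := mkV y (fun i => if i is 0 then true else false).
  have ne : a1 != a0 by apply/eqP => /(congr1 (bit^~ 0%N)); rewrite !bit_mkV.
  case Et: (th y true); case Ef: (th y false) => //=; exfalso; apply: (negP ne);
    apply/eqP; apply: I => // j js; rewrite !C3 // !bit_mkV //;
    case: j js => [|j] js /=; rewrite ?addr0 ?Et ?Ef //.
exists (fun y => th y false) => a j js; rewrite C3 //.
by case: (bit a j) => //=; rewrite C4.
Qed.


Definition pushl (a : V) (l : seq bool) : V := foldl push a l.

Lemma pushl_lvl l a : (pushl a l).1 = a.1 + (size l)%:R.
Proof.
elim: l a => [|x l IH] a /=; first by rewrite addr0.
by rewrite IH /= -addrA -mulrS.
Qed.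

Lemma pushl_bit l a j : (size l <= s)%N -> (j < s)%N -> (s - size l <= j)%N ->
  bit (pushl a l) j = nth false l (j - (s - size l)).
Proof.
elim/last_ind: l j => [|l x IH] j ls js jl.
  by rewrite /= subn0 in jl; lia.
rewrite /pushl foldl_rcons -/(pushl a l) /push bit_mkV // nth_rcons size_rcons in jl ls *.
case: ltnP => j1.
  rewrite IH; [|lia|lia|lia].
  have -> : (j.+1 - (s - size l) = j - (s - (size l).+1))%N by lia.
  by have -> : (j - (s - (size l).+1) < size l)%N by lia.
have -> : ((j - (s - (size l).+1) < size l) = false)%N by apply/negbTE; lia.
by have -> : (j - (s - (size l).+1) == size l)%N by apply/eqP; lia.
Qed.

Lemma pushl_P (P : V -> Prop) : (forall a b, P a -> PXarc a b -> P b) ->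
  forall l a, P a -> P (pushl a l).
Proof.
move=> H; elim=> [|x l IH] a Pa //=.
by apply: IH; apply: H Pa (arc_push _ _).
Qed.

Lemma conn (P : V -> Prop) : (forall a b, P a -> PXarc a b -> P b) ->
  forall a0, P a0 -> forall b, P b.
Proof.
move=> H a0 P0 b.
pose m := nat_of_ord (b.1 - a0.1 - s%:R).
pose u := pushl a0 (nseq m false).
have -> : b = pushl u (val b.2).
  apply: vext.
    rewrite !pushl_lvl size_tup size_nseq /m natr_Zp.
    by rewrite -addrA subrK addrC subrK.
  move=> j js; rewrite pushl_bit ?size_tup ?subnn ?subn0 //; lia.
by apply: pushl_P => //; apply: pushl_P.
Qed.


Definition sL (v a : V) := (v.1 == a.1) && (behead (val v.2) == behead (val a.2)).
Definition sR (v a : V) := (v.1 == a.1) && (take s.-1 (val v.2) == take s.-1 (val a.2)).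

Lemma sLP v a : reflect (v.1 = a.1 /\ forall j, (j < s.-1)%N -> bit v j.+1 = bit a j.+1) (sL v a).
Proof. by apply: (iffP andP) => [[/eqP e /behead_eqP H] | [e H]]; split => //; [exact/eqP | exact/behead_eqP]. Qed.

Lemma sRP v a : reflect (v.1 = a.1 /\ forall j, (j < s.-1)%N -> bit v j = bit a j) (sR v a).
Proof. by apply: (iffP andP) => [[/eqP e /take_eqP H] | [e H]]; split => //; [exact/eqP | exact/take_eqP]. Qed.

Lemma addb_eq (x y c : bool) : (x (+) c = y (+) c) <-> x = y.
Proof. by case: x y c => [] [] []. Qed.

Lemma imset_char (phi : V -> V) (S T : {set V}) : injective phi ->
  (forall v, (phi v \in T) = (v \in S)) -> [set phi v | v in S] = T.
Proof.
move=> inj H; apply/setP => w; have [psi K1 K2] := injF_bij inj.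
by rewrite -[w]K2 mem_imset // H.
Qed.

Section Maps.
Variables (b : Z) (c : Z -> bool).

Definition fw (v : V) : V := mkV (v.1 + b) (fun j => bit v j (+) c (v.1 + j%:R)).
Definition bw (v : V) : V :=
  mkV (-(v.1 + (s.-1)%:R) + b) (fun j => bit v (s.-1 - j) (+) c (v.1 + (s.-1 - j)%:R)).

Lemma fw_inj : injective fw.
Proof.
move=> u v E.
have e : u.1 = v.1 by apply: (addIr b); move: (congr1 fst E).
apply: vext => // j js; move: (congr1 (bit^~ j) E); rewrite !bit_mkV // e.
by move/addb_eq.
Qed.

Lemma bw_inj : injective bw.
Proof.
move=> u v E.
have e : u.1 = v.1.
  by move: (congr1 fst E) => /= /addIr /oppr_inj /addIr.
apply: vext => // j js; move: (congr1 (bit^~ (s.-1 - j)%N) E); rewrite !bit_mkV; try lia.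
rewrite e; have -> : (s.-1 - (s.-1 - j))%N = j by lia.
by move/addb_eq.
Qed.

Lemma fw_arc u v : PXarc (fw u) (fw v) = PXarc u v.
Proof.
apply/arcP/arcP => /= [[e H] | [e H]].
  have e' : v.1 = u.1 + 1 by apply: (addIr b); rewrite e; ring.
  split=> // j js; move: (H j js); rewrite !bit_mkV; try lia.
  by rewrite e' (_ : u.1 + 1 + j%:R = u.1 + (j.+1)%:R) ?addb_eq //; ring.
split; first by rewrite e; ring.
move=> j js; rewrite !bit_mkV; try lia.
by rewrite e (_ : u.1 + 1 + j%:R = u.1 + (j.+1)%:R) ?addb_eq ?H //; ring.
Qed.

Lemma bw_arc u v : PXarc (bw u) (bw v) = PXarc v u.
Proof.
have key : forall j, (j < s.-1)%N -> u.1 = v.1 + 1 ->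
   u.1 + (s.-1 - j.+1)%:R = v.1 + (s.-1 - j)%:R.
  move=> j js ->; have -> : (s.-1 - j = (s.-1 - j.+1).+1)%N by lia.
  ring.
apply/arcP/arcP => /= [[e H] | [e H]].
  have e' : u.1 = v.1 + 1.
    have : u.1 - (v.1 + 1) = (-(v.1 + (s.-1)%:R) + b) - (-(u.1 + (s.-1)%:R) + b + 1) by ring.
    by rewrite e subrr => /eqP; rewrite subr_eq0 => /eqP.
  split=> // j js.
  have := H (s.-1 - j.+1)%N; rewrite !bit_mkV; try lia.
  have -> : (s.-1 - (s.-1 - j.+1))%N = j.+1 by lia.
  have -> : (s.-1 - (s.-1 - j.+1).+1)%N = j by lia.
  rewrite e' (_ : v.1 + 1 + j%:R = v.1 + (j.+1)%:R); last by ring.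
  by move=> h; symmetry; apply/addb_eq; apply: h; lia.
split; first by rewrite e; ring.
move=> j js; rewrite !bit_mkV; try lia.
rewrite key //; apply/addb_eq.
have -> : (s.-1 - j = (s.-1 - j.+1).+1)%N by lia.
by rewrite H //; lia.
Qed.

Lemma fw_sL v a : sL (fw v) (fw a) = sL v a.
Proof.
apply/sLP/sLP => /= [[e H] | [e H]].
  have e' : v.1 = a.1 by apply: (addIr b).
  split=> // j js; move: (H j js); rewrite !bit_mkV; try lia.
  by rewrite e' addb_eq.
split; first by rewrite e.
by move=> j js; rewrite !bit_mkV; try lia; rewrite e addb_eq H.
Qed.

Lemma fw_sR v a : sR (fw v) (fw a) = sR v a.
Proof.
apply/sRP/sRP => /= [[e H] | [e H]].
  have e' : v.1 = a.1 by apply: (addIr b).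
  split=> // j js; move: (H j js); rewrite !bit_mkV; try lia.
  by rewrite e' addb_eq.
split; first by rewrite e.
by move=> j js; rewrite !bit_mkV; try lia; rewrite e addb_eq H.
Qed.

Lemma bw_sL v a : sL (bw v) (bw a) = sR v a.
Proof.
apply/sLP/sRP => /= [[e H] | [e H]].
  have e' : v.1 = a.1 by move: e => /addIr /oppr_inj /addIr.
  split=> // j js; have := H (s.-1 - j.+1)%N; rewrite !bit_mkV; try lia.
  have -> : (s.-1 - (s.-1 - j.+1).+1)%N = j by lia.
  by rewrite e' addb_eq => ->; lia.
split; first by rewrite e.
move=> j js; rewrite !bit_mkV; try lia; rewrite e addb_eq H //; lia.
Qed.

Lemma bw_sR v a : sR (bw v) (bw a) = sL v a.
Proof.
apply/sRP/sLP => /= [[e H] | [e H]].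
  have e' : v.1 = a.1 by move: e => /addIr /oppr_inj /addIr.
  split=> // j js; have := H (s.-1 - j.+1)%N; rewrite !bit_mkV; try lia.
  have -> : (s.-1 - (s.-1 - j.+1))%N = j.+1 by lia.
  by rewrite e' addb_eq => ->; lia.
split; first by rewrite e.
move=> j js; rewrite !bit_mkV; try lia; rewrite e addb_eq.
have -> : (s.-1 - j = (s.-1 - j.+1).+1)%N by lia.
rewrite H //; lia.
Qed.

Lemma fw_CL a : [set fw v | v in CL a] = CL (fw a).
Proof. by apply: imset_char fw_inj _ => v; rewrite !inCL -/(sL _ _) -/(sL _ _) fw_sL fw_arc. Qed.
Lemma fw_CR a : [set fw v | v in CR a] = CR (fw a).
Proof. by apply: imset_char fw_inj _ => v; rewrite !inCR -/(sR _ _) -/(sR _ _) fw_sR fw_arc. Qed.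
Lemma bw_CL a : [set bw v | v in CL a] = CR (bw a).
Proof. by apply: imset_char bw_inj _ => v; rewrite inCL inCR -/(sR _ _) -/(sL _ _) bw_sR bw_arc orbC. Qed.
Lemma bw_CR a : [set bw v | v in CR a] = CL (bw a).
Proof. by apply: imset_char bw_inj _ => v; rewrite inCL inCR -/(sR _ _) -/(sL _ _) bw_sL bw_arc orbC. Qed.

End Maps.

Definition hf (sg : bool) (b : Z) (c : Z -> bool) (p : Z * bool) : Z * bool :=
  ((if sg then - p.1 else p.1) + b, p.2 (+) c p.1).

Lemma hf_inj sg b c : injective (hf sg b c).
Proof.
move=> [x i] [y j] E; have /= e1 := congr1 fst E; have /= e2 := congr1 snd E.
have exy : x = y by clear E; case: sg e1 => /= e1; [apply: oppr_inj; apply: (addIr b) | apply: (addIr b)].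
by move: e2; rewrite exy => /addb_eq ->.
Qed.

Definition hperm sg b c : {perm (Z * bool)} := perm (@hf_inj sg b c).

Lemma hperm_in sg b c : hperm sg b c \in Hgroup r.
Proof.
rewrite inE; apply/existsP; exists sg; apply/existsP; exists b; apply/existsP.
by exists [ffun y => c y]; apply/forallP => p; rewrite permE ffunE.
Qed.

Lemma Hgroup_P g : g \in Hgroup r -> exists sg b (c : {ffun Z -> bool}), forall p, g p = hf sg b c p.
Proof.
rewrite inE => /existsP [sg /existsP [b /existsP [c /forallP H]]].
by exists sg, b, c => p; apply/eqP/H.
Qed.

Lemma actV_fw (g : {perm (Z * bool)}) b c : (forall p, g p = hf false b c p) ->
  forall v, actV g v = fw b c v.
Proof.
move=> Hg v; rewrite /actV !Hg /hf /= add0r addrC eqxx.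
apply: vext => [|j js] /=; first by rewrite addr0.
by rewrite /bit /= -[j]/(nat_of_ord (Ordinal js)) !nth_mktuple /= Hg.
Qed.

Lemma actV_bw (g : {perm (Z * bool)}) b c : (forall p, g p = hf true b c p) ->
  forall v, actV g v = bw b c v.
Proof.
move=> Hg v; rewrite /actV !Hg /hf /=.
have -> : (- 1 + b == - 0 + b + 1) = false.
  apply/negbTE/negP => /eqP e; move/negP: Z2_neq0; apply; apply/eqP.
  have -> : (1 + 1 : Z) = (- 0 + b + 1) - (- 1 + b) by ring.
  by rewrite e subrr.
apply: vext => // j js.
by rewrite bit_mkV // /bit /= -[j]/(nat_of_ord (Ordinal js)) nth_mktuple /= Hg.
Qed.

Definition gW sg b c (w : W) : W := (if sg then bw b c w.1 else fw b c w.1, w.2 (+) sg).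

Lemma gW_act (g : {perm (Z * bool)}) sg b c : (forall p, g p = hf sg b c p) ->
  forall w, val (E (gW sg b c w)) = actP g (val (E w)).
Proof.
move=> Hg [v sd]; rewrite /actP /= /cyc /gW /=.
case: sg Hg => Hg.
- have e : actV g =1 bw b c by apply: actV_bw.
  rewrite e (eq_imset _ e); case: sd => /=; by rewrite ?bw_CL ?bw_CR.
- have e : actV g =1 fw b c by apply: actV_fw.
  rewrite e (eq_imset _ e); case: sd => /=; by rewrite ?fw_CL ?fw_CR.
Qed.

Lemma gW_inj sg b c : injective (gW sg b c).
Proof.
move=> [v i] [w j] E; have /= e1 := congr1 fst E; have /= e2 := congr1 snd E.
have -> : v = w by clear E; case: sg e1 e2 => e1 e2; [apply: (bw_inj e1) | apply: (fw_inj e1)].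
by move: e2 => /addb_eq ->.
Qed.

Lemma gW_adj sg b c x y : A (gW sg b c x) (gW sg b c y) = A x y.
Proof.
case: x y => u i [v j]; rewrite /A /gW /=.
case: sg; rewrite ?(inj_eq (@bw_inj _ _)) ?(inj_eq (@fw_inj _ _)) ?bw_arc ?fw_arc;
  case: i; case: j => //=.
Qed.

Definition v0 (x : Z) : V := mkV x (fun _ => false).

Lemma faithful_aux g g' : g \in Hgroup r -> g' \in Hgroup r ->
  (forall v : V, actV g v = actV g' v) -> g = g'.
Proof.
move=> /Hgroup_P [sg [b [c Hg]]] /Hgroup_P [sg' [b' [c' Hg']]] H.
have act : forall (h : {perm (Z * bool)}) sg b c, (forall p, h p = hf sg b c p) ->
    forall v : V, actV h v = (if sg then bw b c v else fw b c v).
  by move=> h [] ? ? Hh v; [apply: actV_bw | apply: actV_fw].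
have H' : forall v : V, (if sg then bw b c v else fw b c v) = (if sg' then bw b' c' v else fw b' c' v).
  by move=> v; rewrite -(act _ _ _ _ Hg) -(act _ _ _ _ Hg').
have nofb : forall b c b' c', (forall x, (fw b c (v0 x)).1 = (bw b' c' (v0 x)).1) -> False.
  move=> b1 c1 b2 c2 E; move: (E 0) (E 1) => /= e0 e1.
  move/negP: Z2_neq0; apply; apply/eqP.
  have -> : (1 + 1 : Z) = ((1 + b1) - (- (1 + (s.-1)%:R) + b2)) - ((0 + b1) - (-(0 + (s.-1)%:R) + b2)) by ring.
  by rewrite e0 e1 !subrr.
have esg : sg' = sg.
  case: sg sg' H' {Hg Hg'} => [] [] // H'.
  - by case: (nofb b' c' b c) => x; rewrite H'.
  - by case: (nofb b c b' c') => x; rewrite H'.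
move: H' Hg'; rewrite esg => H' Hg'.
have eb : b' = b.
  have := congr1 fst (H' (v0 0)); case: sg {Hg Hg' esg} H' => _ /= e; apply/esym; exact: (addrI _ e).
have ec : forall y, c' y = c y.
  move=> y; have := congr1 (bit^~ (if sg then s.-1 else 0%N)) (H' (v0 y)).
  case: sg {Hg Hg' esg eb} H' => _.
  - rewrite !bit_mkV /=; try lia.
    by rewrite subnn addr0 => ->.
  - rewrite !bit_mkV /=; try lia.
    by rewrite addr0 => ->.
by apply/permP => p; rewrite Hg Hg' /hf eb ec.
Qed.

Lemma trans_aux (w1 w2 : W) : exists sg bb c, gW sg bb c w1 = w2.
Proof.
case: w1 w2 => a sa [b sb].
pose c (sg : bool) (y : Z) := let k := nat_of_ord (y - a.1) in bit a k (+) bit b (if sg then s.-1 - k else k)%N.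
have ck : forall sg j, (j < s)%N -> c sg (a.1 + j%:R) = bit a j (+) bit b (if sg then s.-1 - j else j)%N.
  move=> sg j js; rewrite /c (addrC a.1) addrK valZn //; lia.
have side : forall sg, sa (+) sb = sg -> sa (+) sg = sb by move=> sg <-; case: sa; case: sb.
case sgE : (sa (+) sb).
- exists true, (b.1 + a.1 + (s.-1)%:R), (c true); rewrite /gW /= (side _ sgE); congr (_, _).
  apply: vext => /=; first by ring.
  move=> j js; rewrite bit_mkV // ck; last by lia.
  have -> : (s.-1 - (s.-1 - j))%N = j by lia.
  by case: (bit a _); case: (bit b _).
- exists false, (b.1 - a.1), (c false); rewrite /gW /= (side _ sgE); congr (_, _).
  apply: vext => /=; first by ring.
  move=> j js; rewrite bit_mkV // ck //.
  by case: (bit a _); case: (bit b _).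
Qed.

Lemma coreW (h : W -> W) : injective h -> (forall x y, A (h x) (h y) = A x y) ->
  exists sg bb c, forall w, h w = gW sg bb c w.
Proof.
move=> hinj HA.
have [hi K1 K2] := injF_bij hinj.
have HAi : forall x y, A (hi x) (hi y) = A x y by move=> x y; rewrite -HA !K2.
have Q4h : forall x y, Q4 (h x) (h y) = Q4 x y.
  move=> x y; apply/idP/idP.
  - case/existsP => c /existsP [d /and5P [h1 h2 h3 h4 h5]].
    apply/existsP; exists (hi c); apply/existsP; exists (hi d).
    rewrite -{1}[y]K1 (HAi (h y) c) h1 (HAi c d) h2 -{1}[x]K1 (HAi d (h x)) h3 /=.
    apply/andP; split.
      by apply: contra h4 => /eqP <-; rewrite K2.
    by apply: contra h5 => /eqP <-; rewrite K2.
  - case/existsP => c /existsP [d /and5P [h1 h2 h3 h4 h5]].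
    apply/existsP; exists (h c); apply/existsP; exists (h d).
    by rewrite !HA h1 h2 h3 !(inj_eq hinj) h4 h5.
have spk : forall x y, A x y -> ((h x).1 == (h y).1) = (x.1 == y.1).
  by move=> x y Axy; rewrite spokeQ4 ?HA // spokeQ4 // Q4h.
pose F v := (h (v, true)).1.
pose sig v := (h (v, true)).2.
have hF : forall v sd, h (v, sd) = (F v, if sd then sig v else ~~ sig v).
  move=> v [] ; first by rewrite /F /sig; case: (h _).
  have Avv : A (v, true) (v, false) by rewrite /A /= eqxx.
  have := spk _ _ Avv; rewrite eqxx => /eqP e.
  move: Avv; rewrite -HA /A => /andP [ne _].
  rewrite /F /sig; move: e ne.
  case: (h (v, true)) => p1 q1; case: (h (v, false)) => p2 q2 /= -> ne.
  by congr pair; case: q1 q2 ne => [] [].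
have harc : forall u v, PXarc u v ->
    sig u = sig v /\ (if sig u then PXarc (F u) (F v) else PXarc (F v) (F u)).
  move=> u v uv.
  have Auv : A (u, true) (v, false) by rewrite /A /= uv orbT.
  have nuv : (u == v) = false by apply/negbTE/eqP => e; move: uv; rewrite e arc_irr.
  have := spk _ _ Auv; rewrite nuv !hF /= => eF.
  move: Auv; rewrite -HA !hF /A /= eF /= => /andP [ns H].
  have ss : sig u = sig v by move: ns; case: (sig u); case: (sig v).
  by split.
have sconst : forall v, sig v = sig (v0 0).
  move=> v; apply: (@conn (fun v => sig v = sig (v0 0))) _ (v0 0) erefl v.
  by move=> a b Pa ab; rewrite -Pa (harc _ _ ab).1.
have Finj : injective F.
  move=> u v e; have : h (u, true) = h (v, true) by rewrite !hF e !sconst.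
  by move/hinj => [].
case sE : (sig (v0 0)).
- have fa : forall u v, PXarc u v -> PXarc (F u) (F v).
    by move=> u v uv; have [e] := harc _ _ uv; rewrite e sconst sE.
  have lv : forall v, (F v).1 = v.1 + ((F (v0 0)).1 - (v0 0).1).
    move=> v; apply: (@conn (fun v => (F v).1 = v.1 + ((F (v0 0)).1 - (v0 0).1))) _ (v0 0) _ v.
      by move=> a b Pa ab; rewrite (arc_lvl (fa _ _ ab)) Pa (arc_lvl ab); ring.
    by rewrite addrC subrK.
  have [c Hc] : exists c : Z -> bool, forall a j, (j < s)%N -> bit (F a) j = bit a j (+) c (a.1 + j%:R).
    apply: bitlemma.
  + move=> u v uv j js; have /arcP [_ H] := fa _ _ uv; apply: H; lia.
  + move=> u v e Hb; apply: Finj; apply: vext => //.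
    by rewrite (lv u) (lv v) e.
  exists false, ((F (v0 0)).1 - (v0 0).1), c => -[v sd].
  rewrite hF /gW /= sconst sE addbF; congr (_, _); last by case: sd.
  apply: vext => [|j js]; first by rewrite lv.
  by rewrite Hc // bit_mkV.
- have fa : forall u v, PXarc u v -> PXarc (F v) (F u).
    by move=> u v uv; have [e] := harc _ _ uv; rewrite e sconst sE.
  have lv : forall v, (F v).1 = - v.1 + ((F (v0 0)).1 + (v0 0).1).
    move=> v; apply: (@conn (fun v => (F v).1 = - v.1 + ((F (v0 0)).1 + (v0 0).1))) _ (v0 0) _ v.
      move=> a b Pa ab.
      have -> : (F b).1 = (F a).1 - 1 by rewrite (arc_lvl (fa _ _ ab)) addrK.
      by rewrite Pa (arc_lvl ab); ring.
    by ring.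
  pose G v := mkV (F v).1 (fun j => bit (F v) (s.-1 - j)).
  have [c Hc] : exists c : Z -> bool, forall a j, (j < s)%N -> bit (G a) j = bit a j (+) c (a.1 + j%:R).
    apply: bitlemma.
  + move=> u v uv j js; rewrite !bit_mkV; try lia.
    have /arcP [_ H] := fa _ _ uv.
    rewrite -H; last by lia.
    by congr bit; lia.
  + move=> u v e Hb; apply: Finj; apply: vext; first by rewrite (lv u) (lv v) e.
    move=> j js; have := Hb (s.-1 - j)%N; rewrite !bit_mkV; try lia.
    have -> : (s.-1 - (s.-1 - j))%N = j by lia.
    by apply; lia.
  exists true, ((F (v0 0)).1 + (v0 0).1 + (s.-1)%:R), c => -[v sd].
  rewrite hF /gW /= sconst sE addbT.
  have -> : (if sd then false else ~~ false) = ~~ sd by case: sd.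
  congr (_, _).
  apply: vext => [|j js]; first by rewrite lv /=; ring.
  rewrite bit_mkV // -Hc; last by lia.
  rewrite bit_mkV; last by lia.
  by congr bit; lia.
Qed.

Lemma main_sec :
  [/\ (forall g, g \in Hgroup r ->
         exists f : sPXvert r s -> sPXvert r s,
           is_sPXaut f /\ forall a, val (f a) = actP g (val a)),
      (forall g g', g \in Hgroup r -> g' \in Hgroup r ->
         (forall a : sPXvert r s, actP g (val a) = actP g' (val a)) -> g = g'),
      (forall f : sPXvert r s -> sPXvert r s, is_sPXaut f ->
         exists2 g, g \in Hgroup r & forall a, val (f a) = actP g (val a))
    & (forall a b : sPXvert r s,
         exists2 g, g \in Hgroup r & actP g (val a) = val b)].
Proof.
split.
- move=> g /Hgroup_P [sg [b [c Hg]]].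
  pose f := fun a => E (gW sg b c (Einv a)).
  exists f; split; last by move=> a; rewrite /f (gW_act Hg) EK.
  split.
    apply: injF_bij => x y /(congr1 Einv); rewrite !EinvK => /gW_inj.
    exact: (can_inj EK).
  by move=> x y; rewrite /f !adjE gW_adj -adjE !EK.
- move=> g g' Hg Hg' H; apply: faithful_aux Hg Hg' _ => v.
  by have := congr1 fst (H (E (v, true))).
- move=> f [fbij fadj].
  have hinj : injective (fun w => Einv (f (E w))).
    move=> x y /(congr1 E); rewrite !EK => /(bij_inj fbij) /(congr1 Einv).
    by rewrite !EinvK.
  have HA : forall x y, A (Einv (f (E x))) (Einv (f (E y))) = A x y.
    by move=> x y; rewrite -adjE !EK fadj adjE.
  have [sg [bb [c Hc]]] := coreW hinj HA.
  exists (hperm sg bb c); first exact: hperm_in.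
  have Hg : forall p, hperm sg bb c p = hf sg bb c p by move=> p; rewrite permE.
  move=> a; have := Hc (Einv a); rewrite EK => e.
  by rewrite -[f a]EK e (gW_act Hg) EK.
- move=> a b; have [sg [bb [c e]]] := trans_aux (Einv a) (Einv b).
  exists (hperm sg bb c); first exact: hperm_in.
  have Hg : forall p, hperm sg bb c p = hf sg bb c p by move=> p; rewrite permE.
  by rewrite -[a]EK -(gW_act Hg) e EK.
Qed.

End PX.

Theorem lemma2p12 (r s : nat) :
  (2 < r)%N -> (1 <= s)%N -> (s <= r - 1)%N ->
  [/\ (* H acts on sC(r,s) by automorphisms *)
      (forall g, g \in Hgroup r ->
         exists f : sPXvert r s -> sPXvert r s,
           is_sPXaut f /\ forall a, val (f a) = actP g (val a)),
      (* the action is faithful *)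
      (forall g g', g \in Hgroup r -> g' \in Hgroup r ->
         (forall a : sPXvert r s, actP g (val a) = actP g' (val a)) -> g = g'),
      (* every automorphism of sC(r,s) comes from H, i.e. Aut(sC(r,s)) = H *)
      (forall f : sPXvert r s -> sPXvert r s, is_sPXaut f ->
         exists2 g, g \in Hgroup r & forall a, val (f a) = actP g (val a))
    & (* H is transitive on V sC(r,s) *)
      (forall a b : sPXvert r s,
         exists2 g, g \in Hgroup r & actP g (val a) = val b)].
Proof. by move=> Hr Hs Hsr; apply: main_sec. Qed.
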